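(* Let $f(z)=\sum_{k=0}^\infty a_k z^k$ be an entire function with $a_k>0$ for all $k$ and $a_0=a_1=1$, satisfying the hypotheses: $3\le q_2\le q_3\le q_4\le\cdots$, and for every integer $j_0\ge 2$ with $q_{j_0}<4$ and $q_{j_0+1}\ge 4$, either $q_{j_0}\ge 3.4303$ or ($j_0\ge 3$ and $q_{j_0-1}/q_{j_0+1}\ge 0.525$). Let $\varphi(z):=f(-z)$ and, for $k\ge 2$, $\rho_k:=q_2q_3\cdots q_k\sqrt{q_{k+1}}$. Then for every $k\ge 2$, $$(-1)^k\varphi(\rho_k)\ge 0.$$
   Context: Here $q_n:=\frac{a_{n-1}^2}{a_{n-2}a_n}$ for $n\ge 2$ (these are the same for $f$ and $\varphi$ ). With $a_0=a_1=1$, $\varphi(z)=1-z+\sum_{k=2}^\infty \frac{(-1)^k z^k}{q_2^{k-1}q_3^{k-2}\cdots q_{k-1}^2 q_k}$. *)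

(* Defs.v *)
From Stdlib Require Import Reals.
From Coquelicot Require Import Coquelicot.
Open Scope R_scope.

Definition qseq (a : nat -> R) (n : nat) : R :=
  (a (n - 1)%nat) ^ 2 / (a (n - 2)%nat * a n).

Fixpoint prod_from2 (q : nat -> R) (k : nat) : R :=
  match k with
  | O => 1
  | S O => 1
  | S m => prod_from2 q m * q (S m)
  end.

Definition rho (q : nat -> R) (k : nat) : R := prod_from2 q k * sqrt (q (S k)).

Definition phi (a : nat -> R) (x : R) : R := PSeries a (- x).

(* Main.v *)
Require Import Defs.
From Stdlib Require Import Reals Lra Psatz Lia.
From Coquelicot Require Import Coquelicot.
Open Scope R_scope.

Lemma qge3 (a : nat -> R) (Hq2 : 3 <= qseq a 2)
  (Hmono : forall n, (2 <= n)%nat -> qseq a n <= qseq a (S n)) :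
  forall n, (2 <= n)%nat -> 3 <= qseq a n.
Proof.
  intros n Hn. induction Hn as [|n Hn IH]; [exact Hq2|].
  specialize (Hmono n Hn). lra.
Qed.

Lemma qmono_le (a : nat -> R)
  (Hmono : forall n, (2 <= n)%nat -> qseq a n <= qseq a (S n)) :
  forall n d, (2 <= n)%nat -> qseq a n <= qseq a (n + d).
Proof.
  intros n d Hn. induction d as [|d IH].
  - rewrite Nat.add_0_r; lra.
  - replace (n + S d)%nat with (S (n + d)) by lia.
    specialize (Hmono (n+d)%nat ltac:(lia)). lra.
Qed.

Lemma P_S (q : nat -> R) n : (1 <= n)%nat -> prod_from2 q (S n) = prod_from2 q n * q (S n).
Proof. intros H. destruct n; [lia| reflexivity]. Qed.

Lemma P_ge1 (q : nat -> R) (Hq : forall n, (2 <= n)%nat -> 3 <= q n) :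
  forall n, 1 <= prod_from2 q n.
Proof.
  induction n as [|n IH]; [simpl; lra|].
  destruct n; [simpl; lra|].
  rewrite P_S by lia. specialize (Hq (S (S n)) ltac:(lia)). nra.
Qed.

Lemma P_mono (q : nat -> R) (Hq : forall n, (2 <= n)%nat -> 3 <= q n) :
  forall n d, prod_from2 q n <= prod_from2 q (n + d).
Proof.
  intros n d. induction d as [|d IH].
  - rewrite Nat.add_0_r; lra.
  - replace (n + S d)%nat with (S (n + d)) by lia.
    destruct (n + d)%nat as [|m] eqn:E; [simpl in *; lra|].
    rewrite P_S by lia. pose proof (P_ge1 q Hq (S m)).
    specialize (Hq (S (S m)) ltac:(lia)). nra.
Qed.

Lemma ratio (a : nat -> R) (Hpos : forall k, 0 < a k)
  (H0 : a 0%nat = 1) (H1 : a 1%nat = 1) :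
  forall n, a (S n) = a n / prod_from2 (qseq a) (S n).
Proof.
  induction n as [|n IH].
  - simpl. rewrite H0, H1. field.
  - rewrite P_S by lia.
    assert (HP : prod_from2 (qseq a) (S n) = a n / a (S n)).
    { pose proof (Hpos n); pose proof (Hpos (S n)).
      assert (prod_from2 (qseq a) (S n) <> 0).
      { intro E. rewrite E in IH. unfold Rdiv in IH. rewrite Rinv_0 in IH. lra. }
      rewrite IH. field. split; lra. }
    rewrite HP. unfold qseq.
    replace (S (S n) - 1)%nat with (S n) by lia.
    replace (S (S n) - 2)%nat with n by lia.
    pose proof (Hpos n); pose proof (Hpos (S n)); pose proof (Hpos (S (S n))).
    field. repeat split; lra.
Qed.

Definition Gs (g : nat -> R) (n : nat) : R := sum_f_R0 (fun j => (-1)^(n+j) * g j) n.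

Lemma Gs_S g n : Gs g (S n) = g (S n) - Gs g n.
Proof.
  unfold Gs. simpl sum_f_R0 at 1. fold sum_f_R0.
  rewrite (sum_eq (fun j => (-1)^(S n + j) * g j) (fun j => ((-1)^(n + j) * g j) * -1)).
  2:{ intros. simpl. ring. }
  rewrite <- scal_sum.
  replace (n + S n)%nat with (2 * n + 1)%nat by lia. rewrite pow_add.
  rewrite pow_1_even. ring.
Qed.

Lemma Gs_bound g n : 0 <= g 0%nat -> (forall j, (j < n)%nat -> g j <= g (S j)) ->
  0 <= Gs g n <= g n.
Proof.
  induction n as [|n IH]; intros H0 Hm.
  - unfold Gs. simpl. lra.
  - rewrite Gs_S. assert (0 <= Gs g n <= g n) by (apply IH; auto).
    specialize (Hm n ltac:(lia)). lra.
Qed.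

Lemma tail_bound (c : nat -> R) : (forall n, c (S n) <= c n) -> is_lim_seq c 0 ->
  ex_series (tg_alt c) -> Series (tg_alt c) <= c 0%nat - c 1%nat + c 2%nat.
Proof.
  intros Hd Hl He.
  pose proof (Series_correct _ He) as Hs. apply is_series_Reals in Hs.
  destruct (alternated_series_ineq c (Series (tg_alt c)) 1 Hd) as [_ H].
  - apply is_lim_seq_Reals; exact Hl.
  - exact Hs.
  - unfold tg_alt in *. simpl in H. lra.
Qed.

Lemma ex_ps (a : nat -> R) (Hentire : CV_radius a = p_infty) (x : R) :
  ex_series (fun j => a j * x ^ j).
Proof.
  assert (H : ex_pseries a x) by (apply CV_radius_inside; rewrite Hentire; simpl; trivial).
  revert H. apply ex_series_ext. intros n. rewrite pow_n_pow. unfold scal; simpl. unfold mult; simpl. apply Rmult_comm.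
Qed.

Lemma pow_le_mono (p p0 : R) (n:nat): 0 <= p -> p <= p0 -> p^n <= p0^n.
Proof. intros. apply pow_incr; lra. Qed.
Lemma L2 p p0 : 0 <= p -> p <= p0 -> p0^2 - p^2 <= (p0-p)*(2*p0).
Proof. intros. nra. Qed.
Lemma L4 p p0 : 0 <= p -> p <= p0 -> p0^4 - p^4 <= (p0-p)*(4*p0^3).
Proof. intros.
  assert (E: p0^4 - p^4 = (p0-p)*((p0+p)*(p0^2+p^2))) by ring.
  rewrite E. apply Rmult_le_compat_l; [lra|].
  assert (p^2 <= p0^2) by (apply pow_le_mono; lra). nra. Qed.
Lemma A1 (p:R): 1/2 <= p -> p^2 <= 1/3 -> 0 <= 1-2*p+p^4-p^7/3 + p^2/4 - p^3/36.
Proof. intros.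
  set (p0 := 5774/10000).
  assert (p <= p0) by (unfold p0; nra).
  assert (p^7 <= p0^7) by (apply pow_le_mono; lra).
  assert (p^3 <= p0^3) by (apply pow_le_mono; lra).
  pose proof (L2 p p0 ltac:(lra) ltac:(lra)).
  pose proof (L4 p p0 ltac:(lra) ltac:(lra)).
  assert (0 <= 1-2*p0+p0^4-p0^7/3 + p0^2/4 - p0^3/36) by (unfold p0; lra).
  assert (0 <= (p0-p)*(2 - 4*p0^3 - 2*p0/4)) by (apply Rmult_le_pos; unfold p0 in *; lra).
  nra.
Qed.
Lemma B2 (p:R): 1/2 <= p -> p^2 <= 1/3 -> 0 <= 1-2*p+(1+525/1000)*p^4-p^7/3 - 525/1000*p^5/16.
Proof. intros.
  set (p0 := 5774/10000).
  assert (p <= p0) by (unfold p0; nra).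
  assert (p^7 <= p0^7) by (apply pow_le_mono; lra).
  assert (p^5 <= p0^5) by (apply pow_le_mono; lra).
  pose proof (L4 p p0 ltac:(lra) ltac:(lra)).
  assert (0 <= 1-2*p0+(1+525/1000)*p0^4-p0^7/3 - 525/1000*p0^5/16) by (unfold p0; lra).
  assert (0 <= (p0-p)*(2 - (1+525/1000)*4*p0^3)) by (apply Rmult_le_pos; unfold p0 in *; lra).
  nra.
Qed.
Lemma B1 (p:R): 1/2 <= p -> p^2 <= 10000/34303 -> 0 <= 1-2*p+p^4-p^7/3.
Proof. intros.
  set (p0 := 53993/100000).
  assert (p <= p0) by (unfold p0; nra).
  assert (p^7 <= p0^7) by (apply pow_le_mono; lra).
  pose proof (L4 p p0 ltac:(lra) ltac:(lra)).
  assert (0 <= 1-2*p0+p0^4-p0^7/3) by (unfold p0; lra).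
  assert (0 <= (p0-p)*(2 - 4*p0^3)) by (apply Rmult_le_pos; unfold p0 in *; lra).
  nra.
Qed.

Lemma key p zu zv zw zy : 0 < p -> p^2 <= 1/3 -> p^2 <= zu -> zu <= 1/3 ->
  0 < zv -> zv <= p^2 -> 0 <= zw -> zw <= 1/3 -> 0 <= zy -> zy <= zv ->
  (p <= 1/2 \/ (1/2 < p /\ (1/4 < zv \/ (zv <= 1/4 /\ (p^2 <= 10000/34303 \/ 525/1000*zu <= zv))))) ->
  0 <= 1 - 2*p + p^2*zu + p^2*zv - p^3*zu^2*zw - p^3*zv^2*zy.
Proof.
  intros Hp Hp2 Hzu1 Hzu2 Hzv1 Hzv2 Hzw1 Hzw2 Hzy1 Hzy2 Hc.
  assert (Hp1 : p <= 1) by nra.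
  assert (P3 : 0 <= p^3) by (apply pow_le; lra).
  assert (P2 : 0 <= p^2) by nra.
  assert (P33 : p^3 <= p^2) by (replace (p^3) with (p*p^2) by ring; nra).
  assert (H1 : p^3*zu^2*zw <= p^3*zu^2/3).
  { assert (0 <= p^3*zu^2) by (apply Rmult_le_pos; nra). nra. }
  assert (H2 : p^3*zv^2*zy <= p^3*zv^3).
  { assert (0 <= p^3*zv^2) by (apply Rmult_le_pos; nra). nra. }
  assert (Hh0 : p^4 - p^7/3 <= p^2*zu - p^3*zu^2/3).
  { assert (0 <= (zu-p^2)*(p^2 - p^3*(zu+p^2)/3)).
    { apply Rmult_le_pos; [lra|].
      assert (p^3*(zu+p^2) <= p^3 * (2/3)) by (apply Rmult_le_compat_l; lra). lra. }
    nra. }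
  assert (Hg : 0 <= p^2*zv - p^3*zv^3).
  { assert (p^3*zv^3 = zv * (p^3*zv^2)) by ring.
    assert (zv^2 <= 1) by nra.
    assert (p^3 * zv^2 <= p^2) by nra. nra. }
  destruct Hc as [Hc|[Hp' [Hc|[Hv [Hb|Hb]]]]].
  - assert (p^7 <= p^4).
    { replace (p^7) with (p^4*p^3) by ring. assert (p^3 <= 1) by lra.
      assert (0 <= p^4) by (apply pow_le; lra). nra. }
    nra.
  - assert (A : 0 <= 1-2*p+p^4-p^7/3 + p^2/4 - p^3/36) by (apply A1; lra).
    assert (p^2*zv - p^3*zv^3 >= p^2/4 - p^3/36).
    { assert (p^3*zv^3 = zv * (p^3*zv^2)) by ring.
      assert (zv^2 <= 1/9) by nra.
      assert (p^3 * zv^2 <= p^3/9) by nra.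
      assert (0 <= (zv - 1/4) * (p^2 - p^3/9)) by (apply Rmult_le_pos; lra).
      nra. }
    nra.
  - assert (A : 0 <= 1-2*p+p^4-p^7/3) by (apply B1; lra). nra.
  - assert (A : 0 <= 1-2*p+(1+525/1000)*p^4-p^7/3 - 525/1000*p^5/16) by (apply B2; lra).
    assert (G2 : p^2*zv - p^3*zv^3 >= 525/1000*zu*(p^2 - p^3/16)).
    { assert (p^3*zv^3 = zv * (p^3*zv^2)) by ring.
      assert (zv^2 <= 1/16) by nra.
      assert (p^3 * zv^2 <= p^3/16) by nra.
      assert (0 <= (zv - 525/1000*zu) * (p^2 - p^3/16)) by (apply Rmult_le_pos; lra).
      nra. }
    assert (0 <= (zu-p^2)*((1+525/1000)*p^2 - 525/1000*p^3/16 - p^3*(zu+p^2)/3)).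
    { apply Rmult_le_pos; [lra|].
      assert (p^3*(zu+p^2) <= p^3 * (2/3)) by (apply Rmult_le_compat_l; lra). lra. }
    assert (p^5 = p^3*p^2) by ring. assert (p^7 = p^3*p^2*p^2) by ring.
    nra.
Qed.


Lemma m1_sq k : (-1)^k * (-1)^k = 1.
Proof. rewrite <- pow_add. replace (k+k)%nat with (2*k)%nat by lia. apply pow_1_even. Qed.

Lemma term_id k j (b x : R) : (-1)^k * (b * (-x)^j) = (-1)^(k+j) * (b * x^j).
Proof. replace (-x) with (-1 * x) by ring. rewrite Rpow_mult_distr, pow_add. ring. Qed.

Lemma sign_tail k m : (-1)^(k + (S k + m)) = - (-1)^m.
Proof. rewrite !pow_add. simpl. 
  replace ((-1)^k * (-1 * (-1)^k * (-1)^m)) with (-1 * ((-1)^k * (-1)^k) * (-1)^m) by ring.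
  rewrite m1_sq. ring. Qed.

Lemma div_le1 x y : 0 < y -> x <= y -> x / y <= 1.
Proof. intros. unfold Rdiv. replace 1 with (y * / y) by (field; lra).
  apply Rmult_le_compat_r; [left; apply Rinv_0_lt_compat; lra| lra]. Qed.
Lemma div_ge1 x y : 0 < y -> y <= x -> 1 <= x / y.
Proof. intros. unfold Rdiv. replace 1 with (y * / y) by (field; lra).
  apply Rmult_le_compat_r; [left; apply Rinv_0_lt_compat; lra| lra]. Qed.

Lemma sign_lem k m b x : - (-1)^k * (b * (-x)^(S k + m)) = (-1)^m * (b * x^(S k + m)).
Proof.
  replace (- (-1)^k * (b * (-x)^(S k + m))) with (- ((-1)^k * (b * (-x)^(S k + m)))) by ring.
  rewrite term_id, sign_tail. ring. Qed.

Theorem lemma4 (a : nat -> R)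
  (Hpos : forall k, 0 < a k)
  (H0 : a 0%nat = 1) (H1 : a 1%nat = 1)
  (Hentire : CV_radius a = p_infty)
  (Hq2 : 3 <= qseq a 2)
  (Hmono : forall n, (2 <= n)%nat -> qseq a n <= qseq a (S n))
  (Hj0 : forall j0 : nat, (2 <= j0)%nat ->
      qseq a j0 < 4 -> 4 <= qseq a (S j0) ->
      34303 / 10000 <= qseq a j0 \/
      ((3 <= j0)%nat /\ 525 / 1000 <= qseq a (j0 - 1)%nat / qseq a (S j0))) :
  forall k : nat, (2 <= k)%nat -> 0 <= (-1) ^ k * phi a (rho (qseq a) k).
Proof.
  intros k Hk.
  pose proof (qge3 a Hq2 Hmono) as Hq3.
  pose proof (ratio a Hpos H0 H1) as Hrat0.
  pose proof (P_ge1 _ Hq3) as HP1.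
  pose proof (P_mono _ Hq3) as HPm.
  set (q := qseq a) in *.
  set (P := prod_from2 q) in *.
  set (s := sqrt (q (S k))).
  assert (Hs2 : s * s = q (S k)) by (apply sqrt_sqrt; specialize (Hq3 (S k) ltac:(lia)); lra).
  assert (Hs1 : 1 <= s).
  { assert (0 <= s) by apply sqrt_pos. specialize (Hq3 (S k) ltac:(lia)). nra. }
  unfold phi, rho. fold P. fold s.
  set (x := P k * s).
  assert (Hx : 0 < x) by (unfold x; specialize (HP1 k); nra).
  set (t := fun j => a j * x ^ j).
  assert (Htpos : forall j, 0 < t j).
  { intro j. unfold t. apply Rmult_lt_0_compat; [apply Hpos| apply pow_lt; lra]. }
  assert (Hrat : forall j, t (S j) = t j * (x / P (S j))).
  { intro j. unfold t. rewrite Hrat0. simpl. field. specialize (HP1 (S j)). fold P. lra. }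
  set (u := fun j => a j * (- x) ^ j).
  assert (Hu : ex_series u) by apply (ex_ps a Hentire).
  change (0 <= (-1)^k * Series u).
  rewrite (Series_incr_n u (S k)) by (lia || exact Hu).
  simpl pred.
  set (c := fun m => t (S k + m)%nat).
  assert (HL : (-1)^k * sum_f_R0 u k = Gs t k).
  { rewrite scal_sum. unfold Gs. apply sum_eq. intros i _. unfold u, t.
    rewrite Rmult_comm. apply term_id. }
  assert (HR : (-1)^k * Series (fun m => u (S k + m)%nat) = - Series (tg_alt c)).
  { rewrite <- Series_scal_l, <- Series_opp. apply Series_ext. intro m.
    unfold u, c, t, tg_alt. rewrite (term_id k (S k + m) (a (S k + m)%nat) x), sign_tail. ring. }
  assert (Hce : ex_series (tg_alt c)).
  { apply (ex_series_incr_n u (S k)) in Hu.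
    apply (ex_series_scal_l (- (-1)^k)) in Hu. revert Hu. apply ex_series_ext.
    intro m. unfold u, c, t, tg_alt.
    change (scal (- (-1)^k) ?B) with (- (-1)^k * B). apply sign_lem. }
  assert (Hcl : is_lim_seq c 0).
  { apply ex_series_lim_0. pose proof (ex_ps a Hentire x) as He.
    apply (ex_series_incr_n _ (S k)) in He. exact He. }
  assert (Hcd : forall m, c (S m) <= c m).
  { intro m. unfold c. replace (S k + S m)%nat with (S (S k + m)) by lia.
    rewrite Hrat. pose proof (Htpos (S k + m)%nat).
    assert (x <= P (S (S k + m))).
    { replace (S (S k + m)) with (S k + S m)%nat by lia.
      assert (P (S k) = P k * (s * s)) by (unfold P; rewrite P_S by lia; rewrite Hs2; reflexivity).
      specialize (HPm (S k) (S m)). fold P in HPm. specialize (HP1 k). fold P in HP1.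
      assert (P k * s <= P k * (s*s)) by (apply Rmult_le_compat_l; nra). unfold x. lra. }
    assert (x / P (S (S k + m)) <= 1).
    { specialize (HP1 (S (S k + m))). apply div_le1; lra. }
    nra. }
  pose proof (tail_bound c Hcd Hcl Hce) as Htb.
  rewrite Rmult_plus_distr_l, HL, HR.
  assert (HPS : forall j, (1 <= j)%nat -> P (S j) = P j * q (S j)).
  { intros j Hj. unfold P. apply P_S. exact Hj. }
  assert (HPpos : forall j, 0 < P j) by (intro j; specialize (HP1 j); lra).
  assert (Hqpos : forall j, (2 <= j)%nat -> 0 < q j) by (intros j Hj; specialize (Hq3 j Hj); lra).
  assert (Hspos : 0 < s) by lra.
  set (T := t k).
  set (p := / s).
  set (zu := / q k). set (zv := / q (S (S k))). set (zy := / q (S (S (S k)))).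
  assert (E1 : c 0%nat = T * p).
  { unfold c. replace (S k + 0)%nat with (S k) by lia. rewrite Hrat, HPS by lia.
    rewrite <- Hs2. unfold T, p, x. field. split; [lra| apply Rgt_not_eq, HPpos]. }
  assert (E2 : c 1%nat = T * p^2 * zv).
  { unfold c. replace (S k + 1)%nat with (S (S k)) by lia. rewrite Hrat, HPS by lia.
    rewrite Hrat, HPS by lia.
    rewrite <- Hs2. unfold T, p, x, zv. field.
    pose proof (Hqpos (S (S k)) ltac:(lia)). pose proof (HPpos k).
    repeat split; lra. }
  assert (E3 : c 2%nat = T * p^3 * zv^2 * zy).
  { unfold c. replace (S k + 2)%nat with (S (S (S k))) by lia. rewrite Hrat, (HPS (S (S k))) by lia.
    rewrite Hrat, HPS by lia. rewrite Hrat, HPS by lia.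
    rewrite <- Hs2. unfold T, p, x, zv, zy. field.
    pose proof (Hqpos (S (S k)) ltac:(lia)). pose proof (Hqpos (S (S (S k))) ltac:(lia)). pose proof (HPpos k).
    repeat split; lra. }
  destruct k as [|[|n]]; [lia|lia|].
  rewrite Gs_S, Gs_S. fold T.
  assert (E4 : t (S n) = T * p).
  { unfold T. rewrite (Hrat (S n)). unfold p, x. field. split; [lra| apply Rgt_not_eq, HPpos]. }
  assert (E5 : t n = T * p^2 * zu).
  { unfold T. rewrite (Hrat (S n)), (Hrat n). unfold p, x, zu. rewrite (HPS (S n)) by lia. field.
    pose proof (Hqpos (S (S n)) ltac:(lia)). pose proof (HPpos (S n)).
    repeat split; lra. }
  assert (Hgb : forall m, (m <= S (S n))%nat -> 0 <= Gs t m <= t m).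
  { intros m Hm. apply Gs_bound; [left; apply Htpos|].
    intros j Hj. rewrite Hrat. pose proof (Htpos j).
    assert (1 <= x / P (S j)).
    { apply div_ge1; [apply HPpos|]. 
      specialize (HPm (S j) (S (S n) - S j)%nat). replace (S j + (S (S n) - S j))%nat with (S (S n)) in HPm by lia.
      unfold x. pose proof (HPpos (S (S n))). nra. }
    nra. }
  set (zw := match n with O => 0 | S _ => / q (S n) end).
  assert (EL : T - (t (S n) - Gs t n) >= T - T*p + T * p^2 * zu - T * p^3 * zu^2 * zw).
  { destruct n as [|m].
    - unfold Gs. simpl sum_f_R0. rewrite E4. rewrite <- E5. unfold zw. simpl. lra.
    - rewrite Gs_S. assert (0 <= Gs t m <= t m) by (apply Hgb; lia).
      assert (E6 : t m = T * p^3 * zu^2 * zw).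
      { unfold T. rewrite (Hrat (S (S m))), (Hrat (S m)), (Hrat m).
        unfold p, x, zu, zw. rewrite (HPS (S (S m))), (HPS (S m)) by lia. field.
        pose proof (Hqpos (S (S m)) ltac:(lia)). pose proof (Hqpos (S (S (S m))) ltac:(lia)).
        pose proof (HPpos (S m)). repeat split; lra. }
      rewrite E4, E5 in *. lra. }
  set (K := S (S n)) in *.
  assert (HqK : 3 <= q K) by (apply Hq3; unfold K; lia).
  assert (HqK1 : q K <= q (S K)) by (apply Hmono; unfold K; lia).
  assert (HqK2 : q (S K) <= q (S (S K))) by (apply Hmono; unfold K; lia).
  assert (HqK3 : q (S (S K)) <= q (S (S (S K)))) by (apply Hmono; unfold K; lia).
  assert (Hp2 : p^2 = / q (S K)) by (unfold p; rewrite <- Hs2; field; lra).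
  assert (Hp : 0 < p) by (unfold p; apply Rinv_0_lt_compat; lra).
  assert (c1 : p^2 <= 1/3) by (rewrite Hp2; unfold Rdiv; rewrite Rmult_1_l; apply Rinv_le_contravar; lra).
  assert (c2 : p^2 <= zu) by (rewrite Hp2; unfold zu; apply Rinv_le_contravar; lra).
  assert (c3 : zu <= 1/3) by (unfold zu, Rdiv; rewrite Rmult_1_l; apply Rinv_le_contravar; lra).
  assert (c4 : 0 < zv) by (unfold zv; apply Rinv_0_lt_compat; lra).
  assert (c5 : zv <= p^2) by (rewrite Hp2; unfold zv; apply Rinv_le_contravar; lra).
  assert (c6 : 0 <= zw /\ zw <= 1/3).
  { unfold zw. destruct n as [|m]; [lra|].
    assert (3 <= q (S (S m))) by (apply Hq3; lia).
    split; [left; apply Rinv_0_lt_compat; lra|].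
    unfold Rdiv; rewrite Rmult_1_l; apply Rinv_le_contravar; lra. }
  assert (c7 : 0 <= zy) by (unfold zy; left; apply Rinv_0_lt_compat; lra).
  assert (c8 : zy <= zv) by (unfold zy, zv; apply Rinv_le_contravar; lra).
  assert (c9 : p <= 1/2 \/ (1/2 < p /\ (1/4 < zv \/ (zv <= 1/4 /\ (p^2 <= 10000/34303 \/ 525/1000*zu <= zv))))).
  { destruct (Rle_lt_dec 4 (q (S K))) as [H4|H4].
    - left. unfold p. assert (2 <= s) by nra.
      unfold Rdiv; rewrite Rmult_1_l; apply Rinv_le_contravar; lra.
    - right. split.
      { unfold p. assert (s < 2) by nra. unfold Rdiv; rewrite Rmult_1_l; apply Rinv_lt_contravar; nra. }
      destruct (Rlt_le_dec (q (S (S K))) 4) as [H5|H5].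
      + left. unfold zv. unfold Rdiv; rewrite Rmult_1_l; apply Rinv_lt_contravar; nra.
      + right. split; [unfold zv; unfold Rdiv; rewrite Rmult_1_l; apply Rinv_le_contravar; lra|].
        destruct (Hj0 (S K) ltac:(unfold K; lia) H4 H5) as [H6|[_ H6]].
        * left. rewrite Hp2. replace (10000/34303) with (/ (34303/10000)) by field.
          apply Rinv_le_contravar; lra.
        * right. simpl in H6. replace (K - 0)%nat with K in H6 by lia.
          unfold zu, zv.
          apply (Rmult_le_reg_r (q K * q (S (S K)))); [nra|].
          apply (Rmult_le_compat_r (q (S (S K)))) in H6; [|lra].
          replace (q (S (S n)) / q (S (S K)) * q (S (S K))) with (q K) in H6 by (unfold K in *; field; lra).
          replace (525 / 1000 * / q K * (q K * q (S (S K)))) with (525/1000 * q (S (S K))) by (field; lra).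
          replace (/ q (S (S K)) * (q K * q (S (S K)))) with (q K) by (field; lra). lra. }
  pose proof (key p zu zv zw zy Hp c1 c2 c3 c4 c5 (proj1 c6) (proj2 c6) c7 c8 c9) as Hkey.
  assert (HT : 0 < T) by apply Htpos.
  assert (0 <= T * (1 - 2*p + p^2*zu + p^2*zv - p^3*zu^2*zw - p^3*zv^2*zy)) by (apply Rmult_le_pos; lra).
  rewrite E1, E2, E3 in Htb. lra.
Qed.
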